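(* Let $t\in\mathbb{Q}$ be such that the five rational numbers $(t+i)^2$, $i\in\{0,\pm1,\pm2\}$, are pairwise distinct. Then there exist infinitely many elliptic curves $C: y^2=ax^4+bx^2+c$ with $a,b,c\in\mathbb{Q}$ such that for every $i\in\{0,\pm1,\pm2\}$, $(t+i)^2$ is the $x$-coordinate of a point of $C(\mathbb{Q})$. *)

(* Defs.v *)
From HB Require Import structures.
From mathcomp Require Import all_boot all_order all_algebra.
Set Implicit Arguments. Unset Strict Implicit. Unset Printing Implicit Defensive.
Import Order.TTheory GRing.Theory Num.Theory.
Local Open Scope ring_scope.

(* The quartic curve C : y^2 = a x^4 + b x^2 + c, encoded by (a, b, c). *)
Definition quartic_curve := (rat * rat * rat)%type.

Definition qa (C : quartic_curve) : rat := C.1.1.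
Definition qb (C : quartic_curve) : rat := C.1.2.
Definition qc (C : quartic_curve) : rat := C.2.

(* C is smooth of genus one (an elliptic curve once it has a rational point):
   the quartic a x^4 + b x^2 + c has degree 4 and no repeated root, i.e.
   a <> 0, c <> 0 and b^2 - 4ac <> 0. *)
Definition is_elliptic (C : quartic_curve) : Prop :=
  qa C != 0 /\ qc C != 0 /\ qb C ^+ 2 - 4%:R * qa C * qc C != 0.

Definition is_x_coord (C : quartic_curve) (x : rat) : Prop :=
  exists y : rat, y ^+ 2 = qa C * x ^+ 4 + qb C * x ^+ 2 + qc C.

(* Two equations define the same curve up to the trivial rescaling
   (a,b,c) ~ (l a, l b, l c), l <> 0. *)
Definition proportional (C D : quartic_curve) : Prop :=
  exists l : rat, l != 0 /\ qa D = l * qa C /\ qb D = l * qb C /\ qc D = l * qc C.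

(* Main.v *)
Require Import Defs.
From HB Require Import structures.
From mathcomp Require Import all_boot all_order all_algebra.
From mathcomp Require Import ring lra.
Import Order.TTheory GRing.Theory Num.Theory.
Local Open Scope ring_scope.

Lemma ident_T (e1 e2 e3 e4 s t x : rat) :
  (s * (e1 * x^+2 + e3) + t * x)^+2 -
  ((s^+2 * e1^+2 + 2%:R * s * t) * x^+4 + (s^+2 * (2%:R * e1 * e3) + s * t * (2%:R * e2) + t^+2) * x^+2
   + (s^+2 * e3^+2 + s * t * (2%:R * e4)))
  = 2%:R * s * t * ((e1 * x^+2 + e3) * x - (x^+4 + e2 * x^+2 + e4)).
Proof. ring. Qed.

Lemma ident_k (e1 e2 e3 e4 x l : rat) :
  let p := e1 * x^+2 + e3 in let h := x^+4 + e2 * x^+2 + e4 in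
  let s := x^+2 - l^+2 in let t := 2%:R * p * l - 2%:R * h in
  (p * s + l * t)^+2 =
  (s^+2 * e1^+2 + 2%:R * s * t) * x^+4 + (s^+2 * (2%:R * e1 * e3) + s * t * (2%:R * e2) + t^+2) * x^+2
   + (s^+2 * e3^+2 + s * t * (2%:R * e4)).
Proof. move=> p h s t. rewrite /s /t /p /h. ring. Qed.

Definition mkA (e1 : rat) (s t : {poly rat}) := s ^+ 2 * (e1^+2)%:P + (2%:R)%:P * s * t.
Definition mkB (e1 e2 e3 : rat) (s t : {poly rat}) :=
  s ^+ 2 * (2%:R * e1 * e3)%:P + s * t * (2%:R * e2)%:P + t ^+ 2.
Definition mkC (e3 e4 : rat) (s t : {poly rat}) := s ^+ 2 * (e3^+2)%:P + s * t * (2%:R * e4)%:P.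
Lemma mkAE e1 s t l : (mkA e1 s t).[l] = s.[l] ^+2 * e1^+2 + 2%:R * s.[l] * t.[l].
Proof. by rewrite /mkA !(hornerD, hornerM, hornerC, horner_exp). Qed.
Lemma mkBE e1 e2 e3 s t l : (mkB e1 e2 e3 s t).[l] =
  s.[l] ^+2 * (2%:R * e1 * e3) + s.[l] * t.[l] * (2%:R * e2) + t.[l] ^+2.
Proof. by rewrite /mkB !(hornerD, hornerM, hornerC, horner_exp). Qed.
Lemma mkCE e3 e4 s t l : (mkC e3 e4 s t).[l] = s.[l] ^+2 * e3^+2 + s.[l] * t.[l] * (2%:R * e4).
Proof. by rewrite /mkC !(hornerD, hornerM, hornerC, horner_exp). Qed.

Lemma sum4_le {a b c d : rat} : 0 <= a -> 0 <= b -> 0 <= c -> 0 <= d -> a + b + c + d = 0 -> a <= b /\ b <= a.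
Proof. move=> *; split; lra. Qed.
Lemma eq_from_sum {x y : rat} : x + y = 0 -> 0 <= x -> 0 <= y -> x <= y /\ y <= x.
Proof. move=> *; split; lra. Qed.
Lemma sum4_pos (a b c d : rat) : 0 <= a -> 0 <= b -> 0 <= c -> 0 <= d -> (0 < a \/ 0 < b \/ 0 < c \/ 0 < d) -> 0 < a + b + c + d.
Proof. move=> ? ? ? ? [?|[?|[?|?]]]; lra. Qed.
Lemma sum2_pos {a b : rat} : 0 <= a -> 0 < b -> 0 < a + b.
Proof. move=> *; lra. Qed.

Section Gen.
Variables X0 X1 X2 X3 X4 : rat.
Hypothesis (n0 : 0 <= X0) (n1 : 0 <= X1) (n2 : 0 <= X2) (n3 : 0 <= X3) (n4 : 0 <= X4).
Hypothesis (d01 : X0 != X1) (d02 : X0 != X2) (d03 : X0 != X3) (d04 : X0 != X4)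
  (d12 : X1 != X2) (d13 : X1 != X3) (d14 : X1 != X4) (d23 : X2 != X3) (d24 : X2 != X4)
  (d34 : X3 != X4).

Definition E1 := X0 + X1 + X2 + X3.
Definition E2 := X0*X1 + X0*X2 + X0*X3 + X1*X2 + X1*X3 + X2*X3.
Definition E3 := X0*X1*X2 + X0*X1*X3 + X0*X2*X3 + X1*X2*X3.
Definition E4 := X0*X1*X2*X3.
Definition pk := E1 * X4^+2 + E3.
Definition hk := X4^+4 + E2 * X4^+2 + E4.
Definition Pim := (X4 - X0) * (X4 - X1) * (X4 - X2) * (X4 - X3).
Definition Pip := (X4 + X0) * (X4 + X1) * (X4 + X2) * (X4 + X3).

Definition sP : {poly rat} := (X4^+2)%:P - 'X^2.
Definition tP : {poly rat} := (2%:R * pk)%:P * 'X - (2%:R * hk)%:P.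
Definition aP := locked (mkA E1 sP tP).
Definition bP := locked (mkB E1 E2 E3 sP tP).
Definition cP := locked (mkC E3 E4 sP tP).
Definition dP := locked (bP ^+ 2 - (4%:R)%:P * aP * cP).

Definition sv l := sP.[l].
Definition tv l := tP.[l].

Lemma svE l : sv l = X4^+2 - l^+2.
Proof. by rewrite /sv /sP !hornerE. Qed.
Lemma tvE l : tv l = 2%:R * pk * l - 2%:R * hk.
Proof. by rewrite /tv /tP !hornerE. Qed.

Lemma aPE l : aP.[l] = sv l ^+2 * E1^+2 + 2%:R * sv l * tv l.
Proof. rewrite /aP -lock; exact: mkAE. Qed.
Lemma bPE l : bP.[l] = sv l ^+2 * (2%:R * E1 * E3) + sv l * tv l * (2%:R * E2) + tv l ^+2.
Proof. rewrite /bP -lock; exact: mkBE. Qed.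
Lemma cPE l : cP.[l] = sv l ^+2 * E3^+2 + sv l * tv l * (2%:R * E4).
Proof. rewrite /cP -lock; exact: mkCE. Qed.
Lemma dPE l : dP.[l] = bP.[l]^+2 - 4%:R * aP.[l] * cP.[l].
Proof. rewrite /dP -lock. move: aP bP cP => A B C. by rewrite !(hornerD, hornerN, hornerM, hornerC, horner_exp). Qed.

Definition curve l : quartic_curve := (aP.[l], bP.[l], cP.[l]).

Lemma root_rel x : (E1 * x^+2 + E3) * x - (x^+4 + E2 * x^+2 + E4)
  = - ((x - X0) * (x - X1) * (x - X2) * (x - X3)).
Proof. rewrite /E1 /E2 /E3 /E4. ring. Qed.

Lemma ptT l x : (x - X0) * (x - X1) * (x - X2) * (x - X3) = 0 -> is_x_coord (curve l) x.
Proof.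
move=> H; exists (sv l * (E1 * x^+2 + E3) + tv l * x).
rewrite /qa /qb /qc /= aPE bPE cPE.
apply/eqP; rewrite -subr_eq0 ident_T root_rel H oppr0 mulr0 //.
Qed.

Lemma pt4 l : is_x_coord (curve l) X4.
Proof.
exists (pk * sv l + l * tv l).
rewrite /qa /qb /qc /= aPE bPE cPE svE tvE.
exact: (ident_k E1 E2 E3 E4 X4 l).
Qed.

Lemma pts l : is_x_coord (curve l) X0 /\ is_x_coord (curve l) X1 /\ is_x_coord (curve l) X2
  /\ is_x_coord (curve l) X3 /\ is_x_coord (curve l) X4.
Proof.
split; [apply: ptT; by rewrite subrr !mul0r|].
split; [apply: ptT; by rewrite subrr mulr0 !mul0r|].
split; [apply: ptT; by rewrite subrr mulr0 !mul0r|].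
split; [apply: ptT; by rewrite subrr mulr0|].
exact: pt4.
Qed.

Lemma E1_neq0 : E1 != 0.
Proof.
rewrite /E1; apply/eqP => H.
have [h1 h2] := sum4_le n0 n1 n2 n3 H.
by move: d01; rewrite eq_le h1 h2.
Qed.

Lemma pos_of_neq {x y : rat} : 0 <= x -> 0 <= y -> x != y -> 0 < x + y.
Proof.
move=> hx hy hxy; rewrite lt_def; apply/andP; split; last exact: addr_ge0.
apply/eqP => H; move/eqP: hxy; apply; apply/eqP; rewrite eq_le.
have [h1 h2] := eq_from_sum H hx hy. by rewrite h1 h2.
Qed.

Lemma pos_or_zero {x : rat} : 0 <= x -> x = 0 \/ 0 < x.
Proof. rewrite le_eqVlt => /orP [/eqP <-|]; by [left|right]. Qed.

Lemma E3_pos : 0 < E3.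
Proof.
rewrite /E3.
have p012 : 0 <= X0*X1*X2 by rewrite !mulr_ge0.
have p013 : 0 <= X0*X1*X3 by rewrite !mulr_ge0.
have p023 : 0 <= X0*X2*X3 by rewrite !mulr_ge0.
have p123 : 0 <= X1*X2*X3 by rewrite !mulr_ge0.
have nz : forall x y : rat, 0 <= x -> x != y -> y = 0 -> 0 < x.
  move=> x y hx hxy hy; rewrite lt_def hx andbT; by rewrite -hy.
case: (pos_or_zero n0) => [z0|q0].
  have q1 : 0 < X1 by apply: (nz _ X0) => //; rewrite eq_sym.
  have q2 : 0 < X2 by apply: (nz _ X0) => //; rewrite eq_sym.
  have q3 : 0 < X3 by apply: (nz _ X0) => //; rewrite eq_sym.
  apply: sum4_pos => //; have : 0 < X1*X2*X3 by rewrite !mulr_gt0.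
  tauto.
case: (pos_or_zero n1) => [z1|q1].
  have q2 : 0 < X2 by apply: (nz _ X1) => //; rewrite eq_sym.
  have q3 : 0 < X3 by apply: (nz _ X1) => //; rewrite eq_sym.
  apply: sum4_pos => //; have : 0 < X0*X2*X3 by rewrite !mulr_gt0.
  tauto.
case: (pos_or_zero n2) => [z2|q2].
  have q3 : 0 < X3 by apply: (nz _ X2) => //; rewrite eq_sym.
  apply: sum4_pos => //; have : 0 < X0*X1*X3 by rewrite !mulr_gt0.
  tauto.
apply: sum4_pos => //; have : 0 < X0*X1*X2 by rewrite !mulr_gt0.
tauto.
Qed.

Lemma E3_neq0 : E3 != 0.
Proof. by rewrite gt_eqF // E3_pos. Qed.

Lemma pk_pos : 0 < pk.
Proof.
rewrite /pk; have h1 : 0 <= E1 * X4^+2.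
  by rewrite mulr_ge0 ?sqr_ge0 // /E1 !addr_ge0.
exact: sum2_pos h1 E3_pos.
Qed.

Lemma pk_neq0 : pk != 0.
Proof. by rewrite gt_eqF // pk_pos. Qed.

Lemma Pim_neq0 : Pim != 0.
Proof.
rewrite /Pim !mulf_neq0 // subr_eq0 eq_sym //.
Qed.

Lemma Pip_neq0 : Pip != 0.
Proof.
rewrite /Pip !mulf_neq0 // gt_eqF // addrC pos_of_neq // eq_sym //.
Qed.

Lemma hk_minus : hk - pk * X4 = Pim.
Proof. rewrite /hk /pk /Pim /E1 /E2 /E3 /E4; ring. Qed.
Lemma hk_plus : hk + pk * X4 = Pip.
Proof. rewrite /hk /pk /Pip /E1 /E2 /E3 /E4; ring. Qed.

Definition l0 := hk / pk.

Lemma tv_l0 : tv l0 = 0.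
Proof.
rewrite tvE /l0 -mulrA [pk * _]mulrC divfK ?pk_neq0 //; by rewrite subrr.
Qed.

Lemma sv_l0 : sv l0 != 0.
Proof.
rewrite svE; apply/eqP => H.
have hq : l0 * pk = hk by rewrite /l0 divfK ?pk_neq0.
have : (X4^+2 - l0^+2) * pk^+2 = - ((hk - pk * X4) * (hk + pk * X4)).
  rewrite -hq; ring.
rewrite H mul0r hk_minus hk_plus => /esym/eqP.
by rewrite oppr_eq0 mulf_eq0 (negbTE Pim_neq0) (negbTE Pip_neq0).
Qed.

Lemma sv_X4 : sv X4 = 0.
Proof. by rewrite svE subrr. Qed.
Lemma tv_X4 : tv X4 = - (2%:R * Pim).
Proof. rewrite tvE -hk_minus; ring. Qed.
Lemma tv_X4_neq0 : tv X4 != 0.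
Proof. by rewrite tv_X4 oppr_eq0 mulf_neq0 ?Pim_neq0 // pnatr_eq0. Qed.

Lemma aP_neq0 : aP != 0.
Proof.
apply/eqP => H; have := congr1 (fun p => p.[l0]) H => /=.
rewrite aPE tv_l0 horner0 mulr0 addr0 => /eqP.
by rewrite mulf_eq0 !expf_eq0 /= (negbTE sv_l0) (negbTE E1_neq0).
Qed.

Lemma cP_neq0 : cP != 0.
Proof.
apply/eqP => H; have := congr1 (fun p => p.[l0]) H => /=.
rewrite cPE tv_l0 horner0 mulr0 mul0r addr0 => /eqP.
by rewrite mulf_eq0 !expf_eq0 /= (negbTE sv_l0) (negbTE E3_neq0).
Qed.

Lemma aX4 : aP.[X4] = 0.
Proof. by rewrite aPE sv_X4 !(mul0r, mulr0, expr0n, add0r). Qed.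
Lemma cX4 : cP.[X4] = 0.
Proof. by rewrite cPE sv_X4 !(mul0r, mulr0, expr0n, add0r). Qed.
Lemma bX4 : bP.[X4] = tv X4 ^+ 2.
Proof. by rewrite bPE sv_X4 !(mul0r, mulr0, expr0n, add0r). Qed.

Lemma dP_neq0 : dP != 0.
Proof.
apply/eqP => H; have := congr1 (fun p => p.[X4]) H => /=.
rewrite dPE aX4 cX4 bX4 horner0 !(mulr0, mul0r, subr0) => /eqP.
by rewrite !expf_eq0 /= (negbTE tv_X4_neq0).
Qed.

Definition good (prev : seq rat) (l : rat) : bool :=
  [&& aP.[l] != 0, cP.[l] != 0, dP.[l] != 0 &
   all (fun z => (aP.[z] == 0) || (aP.[z] * bP.[l] - bP.[z] * aP.[l] != 0)) prev].

Definition Qp (prev : seq rat) : {poly rat} :=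
  aP * cP * dP * \prod_(z <- prev | aP.[z] != 0) (aP.[z] *: bP - bP.[z] *: aP).

Lemma Qp_neq0 prev : Qp prev != 0.
Proof.
rewrite /Qp !mulf_neq0 ?aP_neq0 ?cP_neq0 ?dP_neq0 //.
rewrite prodf_seq_neq0; apply/allP => z _; apply/implyP => az.
apply/eqP => H; have := congr1 (fun p => p.[X4]) H => /=.
rewrite !(hornerD, hornerN, hornerZ) aX4 bX4 mulr0 subr0 horner0 => /eqP.
by rewrite mulf_eq0 (negbTE az) expf_eq0 /= (negbTE tv_X4_neq0).
Qed.

Lemma Qp_good prev l : (Qp prev).[l] != 0 -> good prev l.
Proof.
rewrite /Qp !hornerM horner_prod !mulf_eq0 !negb_or => /andP[/andP[/andP[ha hc] hd] hp].
rewrite /good ha hc hd /=.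
move: hp; rewrite prodf_seq_neq0 => /allP hp; apply/allP => z zin.
have := hp z zin; rewrite !(hornerD, hornerN, hornerZ).
by case: (aP.[z] == 0).
Qed.

Lemma ex_good prev : exists n : nat, good prev n%:R.
Proof.
set Q := Qp prev.
have : has (fun n : nat => good prev n%:R) (iota 0 (size Q)).
  apply/negPn/negP => /hasPn H.
  set rs := [seq (n%:R : rat) | n <- iota 0 (size Q)].
  have H1 : all (root Q) rs.
    apply/allP => x /mapP [n nin ->]; rewrite /root; apply/negPn/negP => hn.
    by move: (H n nin); rewrite Qp_good.
  have H2 : uniq rs.
    rewrite map_inj_uniq ?iota_uniq // => m n /eqP; rewrite eqr_nat => /eqP //.
  have := max_poly_roots (Qp_neq0 prev) H1 H2.
  by rewrite size_map size_iota ltnn.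
case/hasP => n _ hn; by exists n.
Qed.

Definition next (prev : seq rat) : nat := xchoose (ex_good prev).
Fixpoint pre (n : nat) : seq rat :=
  if n is m.+1 then rcons (pre m) (next (pre m))%:R else [::].
Definition lam n : rat := (next (pre n))%:R.
Lemma good_lam n : good (pre n) (lam n).
Proof. exact: (xchooseP (ex_good (pre n))). Qed.
Lemma pre_lam n : pre n = [seq lam j | j <- iota 0 n].
Proof.
elim: n => // n IH.
have -> : iota 0 n.+1 = rcons (iota 0 n) n by rewrite -cats1 -addn1 iotaD.
by rewrite map_rcons -IH.
Qed.
Lemma lam_in m n : (m < n)%N -> lam m \in pre n.
Proof. by move=> mn; rewrite pre_lam; apply: map_f; rewrite mem_iota. Qed.

Lemma main_gen : exists Cs : nat -> quartic_curve,
  (forall n, is_elliptic (Cs n) /\ (is_x_coord (Cs n) X0 /\ is_x_coord (Cs n) X1 /\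
     is_x_coord (Cs n) X2 /\ is_x_coord (Cs n) X3 /\ is_x_coord (Cs n) X4)) /\
  (forall m n, m <> n -> ~ proportional (Cs m) (Cs n)).
Proof.
exists (fun n => curve (lam n)); split.
  move=> n; split; last exact: pts.
  have := good_lam n; rewrite /good => /and4P [ha hc hd _].
  by rewrite /is_elliptic /qa /qb /qc /= -dPE.
have key : forall m n, (m < n)%N -> aP.[lam m] * bP.[lam n] - bP.[lam m] * aP.[lam n] != 0.
  move=> m n mn.
  have := good_lam n; rewrite /good => /and4P [_ _ _ /allP H].
  have := H _ (lam_in _ _ mn); have := good_lam m; rewrite /good => /and4P [ha _ _ _].
  by rewrite (negbTE ha).
move=> m n mn [l [l0 [ha [hb _]]]].
move: ha hb; rewrite /qa /qb /= => ha hb.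
case: (ltngtP m n) => [lt|gt|eq]; last by [].
- have := key _ _ lt; rewrite ha hb; apply/negP; rewrite negbK; apply/eqP; ring.
- have := key _ _ gt; rewrite ha hb; apply/negP; rewrite negbK; apply/eqP; ring.
Qed.

End Gen.


Lemma int_cases (i : int) : `|i| <= 2 -> i = -2 \/ i = -1 \/ i = 0 \/ i = 1 \/ i = 2.
Proof. case: i => [[|[|[|n]]]|[|[|n]]] //= H; try by (do ! (try (by left); right)). Qed.

Theorem proposition1 (t : rat)
  (Hdist : forall i j : int, `|i| <= 2 -> `|j| <= 2 ->
     (t + i%:~R) ^+ 2 = (t + j%:~R) ^+ 2 -> i = j) :
  exists Cs : nat -> quartic_curve,
    (forall n, is_elliptic (Cs n) /\
       forall i : int, `|i| <= 2 -> is_x_coord (Cs n) ((t + i%:~R) ^+ 2)) /\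
    (forall m n, m <> n -> ~ proportional (Cs m) (Cs n)).
Proof.
pose X (j : int) := (t + j%:~R) ^+ 2.
have D : forall a b : int, `|a| <= 2 -> `|b| <= 2 -> a != b -> X a != X b.
  move=> a b ha hb ab; apply/eqP => H; move/eqP: ab; apply; exact: Hdist.
have N : forall a, 0 <= X a by move=> a; exact: sqr_ge0.
have [Cs [H1 H2]] := main_gen _ _ _ _ _ (N (-2)) (N (-1)) (N 0) (N 1) (N 2)
   (D (-2) (-1) isT isT isT) (D (-2) 0 isT isT isT) (D (-2) 1 isT isT isT) (D (-2) 2 isT isT isT)
   (D (-1) 0 isT isT isT) (D (-1) 1 isT isT isT) (D (-1) 2 isT isT isT)
   (D 0 1 isT isT isT) (D 0 2 isT isT isT) (D 1 2 isT isT isT).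
exists Cs; split => // n; have [He [p0 [p1 [p2 [p3 p4]]]]] := H1 n; split => // i hi.
by have := int_cases _ hi; case=> [->|[->|[->|[->|->]]]].
Qed.
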